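(* Let $0<q<1$. Then \[ \sum_{n=0}^{\infty}\frac{(1/2|q^{2})_{n}^{2}}{[n]_{q^{2}}!\,[n+2]_{q^{2}}!}\,q^{4n}=\frac{(1+q)^{4}q^{1/4}}{\pi_{q}(1+q+q^{2})^{2}}. \]
   Context: Let $0<q<1$ and write $q^{x}=e^{x\log q}$. $[z]_{q^2}=\frac{1-q^{2z}}{1-q^2}$; $[0]_{q^2}!=1$, $[n]_{q^2}!=\prod_{k=1}^n[k]_{q^2}$; $(1/2|q^2)_n=\prod_{k=0}^{n-1}[1/2+k]_{q^2}$ (empty product $=1$). With $(z;q)_\infty=\prod_{k\ge0}(1-zq^k)$, $\pi_q=(1-q^2)q^{1/4}\frac{(q^2;q^2)_\infty^2}{(q;q^2)_\infty^2}$. *)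

(* Defs.v *)
From Stdlib Require Import Reals.
Open Scope R_scope.

Definition qpow (q x : R) : R := exp (x * ln q).

Definition qnum (q z : R) : R := (1 - qpow q (2 * z)) / (1 - q ^ 2).

Fixpoint qfact (q : R) (n : nat) : R :=
  match n with
  | O => 1
  | S m => qfact q m * qnum q (INR (S m))
  end.

(* (1/2|q^2)_n = prod_{k=0}^{n-1} [1/2 + k]_{q^2} *)
Fixpoint qhalf_poch (q : R) (n : nat) : R :=
  match n with
  | O => 1
  | S m => qhalf_poch q m * qnum q (1/2 + INR m)
  end.

Fixpoint qpoch_partial (z p : R) (N : nat) : R :=
  match N with
  | O => 1
  | S m => qpoch_partial z p m * (1 - z * p ^ m)
  end.

Definition qpoch_inf (z p L : R) : Prop := Un_cv (qpoch_partial z p) L.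

(* pi_q = (1-q^2) q^{1/4} (q^2;q^2)_inf^2 / (q;q^2)_inf^2,
   given A = (q^2;q^2)_inf and B = (q;q^2)_inf *)
Definition pi_q_of (q A B : R) : R :=
  (1 - q ^ 2) * qpow q (1/4) * A ^ 2 / B ^ 2.

Definition term6 (q : R) (n : nat) : R :=
  (qhalf_poch q n) ^ 2 / (qfact q n * qfact q (n + 2)) * q ^ (4 * n).

(* Main.v *)
Require Import Defs.
From Stdlib Require Import Reals Lra Lia Psatz.
From Coquelicot Require Import Coquelicot.
Open Scope R_scope.

Fixpoint uu (q : R) (k n : nat) : R :=
  match n with
  | O => 1
  | S m => uu q k m * ((1 - q * (q^2)^m)^2 * (q^4 * (q^2)^k) /
            ((1 - q^2 * (q^2)^m) * (1 - q^6 * (q^2)^k * (q^2)^m)))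
  end.

Lemma pow01 x n : 0 < x <= 1 -> 0 < x^n <= 1.
Proof.
  intros H; induction n as [|n IH]; simpl; [lra|]. split; [nra|nra].
Qed.

Lemma pp q n : 0 < q < 1 -> 0 < (q^2)^n <= 1.
Proof. intros. apply pow01. split; nra. Qed.

Lemma m2 a b : 0 <= a < 1 -> 0 <= b <= 1 -> 0 <= a * b < 1.
Proof. intros; split; nra. Qed.

Ltac bnd := repeat match goal with
  | |- 0 <= ?a * ?b < 1 => apply m2
  | |- 0 <= ?a < 1 => split; [nra|nra]
  | |- 0 <= ?a <= 1 => split; [nra|nra]
  end.
Ltac nz := match goal with
  | |- ?a - ?b <> 0 => let H := fresh in assert (H : 0 <= b < 1) by bnd; lra
  | |- ?a * ?b <> 0 => apply Rmult_integral_contrapositive_currified; nz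
  end.

Lemma uu_shift q k n : 0 < q < 1 ->
  uu q (S k) n = uu q k n * (1 - q^6 * (q^2)^k) * (q^2)^n / (1 - q^6 * (q^2)^k * (q^2)^n).
Proof.
  intros Hq. pose proof (pp q k Hq) as Hk.
  assert (H2 : 0 < q^2 < 1) by (split; nra).
  assert (H4 : 0 < q^4 < 1) by (split; nra).
  assert (H6 : 0 < q^6 < 1) by (split; nra).
  induction n as [|n IH].
  - simpl uu. rewrite !pow_O. field. nz.
  - pose proof (pp q n Hq) as Hn.
    change (uu q (S k) (S n)) with (uu q (S k) n * ((1 - q * (q^2)^n)^2 * (q^4 * (q^2)^(S k)) /
            ((1 - q^2 * (q^2)^n) * (1 - q^6 * (q^2)^(S k) * (q^2)^n)))).
    change (uu q k (S n)) with (uu q k n * ((1 - q * (q^2)^n)^2 * (q^4 * (q^2)^k) /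
            ((1 - q^2 * (q^2)^n) * (1 - q^6 * (q^2)^k * (q^2)^n)))).
    rewrite IH. change ((q^2)^(S k)) with (q^2*(q^2)^k). change ((q^2)^(S n)) with (q^2*(q^2)^n).
    field. repeat split; nz.
Qed.

Definition rho q k := (1 - q^5*(q^2)^k)^2 / ((1 - q^6*(q^2)^k)*(1 - q^4*(q^2)^k)).
Definition gg q k n := (1 - (q^2)^n) * uu q k n / (1 - q^4*(q^2)^k).

Lemma contig q k n : 0 < q < 1 ->
  uu q k n - rho q k * uu q (S k) n = gg q k n - gg q k (S n).
Proof.
  intros Hq. pose proof (pp q k Hq) as Hk. pose proof (pp q n Hq) as Hn.
  assert (H2 : 0 < q^2 < 1) by (split; nra).
  assert (H4 : 0 < q^4 < 1) by (split; nra).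
  assert (H5 : 0 < q^5 < 1) by (split; nra).
  assert (H6 : 0 < q^6 < 1) by (split; nra).
  rewrite uu_shift by exact Hq. unfold gg, rho.
  change (uu q k (S n)) with (uu q k n * ((1 - q * (q^2)^n)^2 * (q^4 * (q^2)^k) /
            ((1 - q^2 * (q^2)^n) * (1 - q^6 * (q^2)^k * (q^2)^n)))).
  change ((q^2)^(S n)) with (q^2*(q^2)^n).
  field. repeat split; nz.
Qed.

Lemma uu_bound q k n : 0 < q < 1 -> 0 <= uu q k n <= (q^4*(q^2)^k)^n.
Proof.
  intros Hq. pose proof (pp q k Hq) as Hk.
  assert (H2 : 0 < q^2 < 1) by (split; nra).
  assert (H4 : 0 < q^4 < 1) by (split; nra).
  assert (H6 : 0 < q^6 < 1) by (split; nra).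
  induction n as [|n IH]; [simpl; lra|].
  pose proof (pp q n Hq) as Hn.
  change (uu q k (S n)) with (uu q k n * ((1 - q * (q^2)^n)^2 * (q^4 * (q^2)^k) /
            ((1 - q^2 * (q^2)^n) * (1 - q^6 * (q^2)^k * (q^2)^n)))).
  change ((q^4*(q^2)^k)^(S n)) with ((q^4*(q^2)^k) * (q^4*(q^2)^k)^n).
  set (X := (q^2)^n) in *. set (Y := (q^2)^k) in *.
  assert (A1 : 0 <= q^2*X < 1) by bnd.
  assert (A2 : 0 <= q^6*Y*X < 1) by bnd.
  assert (A3 : q^2 * X <= q * X) by (assert (q^2 <= q) by nra; nra).
  assert (A4 : q^6*Y*X <= q * X).
  { assert (q^6*Y <= q) by (assert (q^6 <= q) by (simpl; nra); nra). nra. }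
  assert (A5 : 0 <= q * X <= 1) by nra.
  assert (R0 : 0 <= (1 - q * X)^2 <= (1 - q^2 * X) * (1 - q^6 * Y * X)) by nra.
  assert (R1 : 0 <= (1 - q * X)^2 / ((1 - q^2 * X) * (1 - q^6 * Y * X)) <= 1).
  { split. apply Rdiv_le_0_compat; [lra|nra].
    apply Rmult_le_reg_r with ((1 - q^2 * X) * (1 - q^6 * Y * X)); [nra|].
    rewrite Rmult_1_l. unfold Rdiv. rewrite Rmult_assoc, Rinv_l by nz. lra. }
  assert (0 <= q^4 * Y) by nra.
  assert (E : (1 - q * X)^2 * (q^4 * Y) / ((1 - q^2 * X) * (1 - q^6 * Y * X)) =
      (q^4*Y) * ((1 - q * X)^2 / ((1 - q^2 * X) * (1 - q^6 * Y * X)))) by (field; repeat split; nz).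
  rewrite E. split; [apply Rmult_le_pos; [lra|apply Rmult_le_pos; lra]|].
  rewrite Rmult_comm. apply Rmult_le_compat; try lra; [apply Rmult_le_pos; lra|].
  rewrite <- (Rmult_1_r (q^4*Y)) at 2. apply Rmult_le_compat_l; lra.
Qed.

Lemma ser_of_part a (l : R) : is_lim_seq (fun N => sum_f_R0 a N) l -> is_series a l.
Proof. intros H. apply is_series_Reals. exact (proj1 (is_lim_seq_Reals _ _) H). Qed.

Lemma part_of_ser a (l : R) : is_series a l -> is_lim_seq (fun N => sum_f_R0 a N) l.
Proof. intros H. apply is_series_Reals in H. exact (proj2 (is_lim_seq_Reals _ _) H). Qed.

Lemma telesc (g : nat -> R) (l : R) : is_lim_seq g l ->
  is_series (fun n => g n - g (S n)) (g O - l).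
Proof.
  intros H. apply ser_of_part.
  apply is_lim_seq_ext with (fun N => g O - g (S N)).
  { intros N. induction N as [|N IH]; simpl; [lra|]. rewrite <- IH. lra. }
  apply is_lim_seq_minus'. apply is_lim_seq_const. apply (is_lim_seq_incr_1 g l). exact H.
Qed.

Lemma z_bounds q k : 0 < q < 1 -> 0 < q^4*(q^2)^k < 1.
Proof. intros Hq. pose proof (pp q k Hq). assert (0 < q^2 < 1) by (split; nra). assert (0 < q^4 < 1) by (split; nra). split; nra. Qed.

Lemma ex_uu q k : 0 < q < 1 -> ex_series (uu q k).
Proof.
  intros Hq. pose proof (z_bounds q k Hq).
  apply (@ex_series_le R_AbsRing R_CompleteNormedModule) with (fun n => (q^4*(q^2)^k)^n).
  - intros n. change (norm (uu q k n)) with (Rabs (uu q k n)).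
    pose proof (uu_bound q k n Hq). rewrite Rabs_pos_eq; lra.
  - apply ex_series_geom. rewrite Rabs_pos_eq; lra.
Qed.

Definition SS q k := Series (uu q k).

Lemma SS_bounds q k : 0 < q < 1 -> 1 <= SS q k <= / (1 - q^4*(q^2)^k).
Proof.
  intros Hq. pose proof (z_bounds q k Hq). split.
  - pose proof (part_of_ser _ _ (Series_correct _ (ex_uu q k Hq))) as H1.
    assert (Hl := is_lim_seq_le (fun _ => 1) (fun N => sum_f_R0 (uu q k) N) 1 (SS q k)).
    simpl in Hl. apply Hl; [|apply is_lim_seq_const|exact H1].
    intros N. induction N as [|N IH]; simpl; [lra|].
    pose proof (uu_bound q k (S N) Hq). simpl in H0. lra.
  - unfold SS. rewrite <- Series_geom by (rewrite Rabs_pos_eq; lra).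
    apply Series_le. intros n; apply uu_bound; exact Hq.
    apply ex_series_geom. rewrite Rabs_pos_eq; lra.
Qed.

Lemma SS_rec q k : 0 < q < 1 -> SS q k = rho q k * SS q (S k).
Proof.
  intros Hq. pose proof (z_bounds q k Hq).
  assert (Hg : is_lim_seq (gg q k) 0).
  { apply is_lim_seq_le_le with (fun _ => 0) (fun n => (q^4*(q^2)^k)^n / (1 - q^4*(q^2)^k)).
    - intros n. unfold gg. pose proof (uu_bound q k n Hq). pose proof (pp q n Hq).
      split.
      + apply Rdiv_le_0_compat; [apply Rmult_le_pos|]; lra.
      + unfold Rdiv. apply Rmult_le_compat_r. apply Rlt_le, Rinv_0_lt_compat; lra.
        nra.
    - apply is_lim_seq_const.
    - replace (Finite 0) with (Rbar_mult 0 (/ (1 - q^4*(q^2)^k))) by (simpl; f_equal; ring).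
      apply is_lim_seq_scal_r. apply is_lim_seq_geom. rewrite Rabs_pos_eq; lra. }
  pose proof (telesc _ _ Hg) as T.
  assert (T2 : is_series (fun n => uu q k n - rho q k * uu q (S k) n) 0).
  { apply is_series_ext with (fun n => gg q k n - gg q k (S n)).
    intros n; rewrite contig; [reflexivity|exact Hq].
    replace 0 with (gg q k 0 - 0); [exact T|]. unfold gg. simpl uu. rewrite pow_O. unfold Rdiv. ring. }
  pose proof (is_series_scal_l (rho q k) _ _ (Series_correct _ (ex_uu q (S k) Hq))) as T3.
  pose proof (is_series_plus _ _ _ _ T2 T3) as T4.
  assert (T5 : is_series (uu q k) (0 + rho q k * Series (uu q (S k)))).
  { eapply is_series_ext; [|exact T4]. intros n. cbv beta.
    change ((uu q k n - rho q k * uu q (S k) n) + (rho q k * uu q (S k) n) = uu q k n). ring. }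
  apply is_series_unique in T5. unfold SS. rewrite T5. ring.
Qed.

Definition AA q N := qpoch_partial (q^2) (q^2) N.
Definition BB q N := qpoch_partial q (q^2) N.

Lemma prod_id q K : 0 < q < 1 ->
  SS q 0 * ((1-q)^2*(1-q^3)^2) * AA q (S (S K)) * AA q (S K) =
  SS q K * BB q (S (S K)) ^ 2 * ((1-q^2)^2*(1-q^4)).
Proof.
  intros Hq. induction K as [|K IH].
  - unfold AA, BB. simpl. ring.
  - assert (E1 : AA q (S (S (S K))) = AA q (S (S K)) * (1 - q^6 * (q^2)^K)).
    { unfold AA. change (qpoch_partial (q^2) (q^2) (S (S (S K)))) with
        (qpoch_partial (q^2) (q^2) (S (S K)) * (1 - q^2 * (q^2 * (q^2 * (q^2)^K)))). f_equal. ring. }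
    assert (E2 : AA q (S (S K)) = AA q (S K) * (1 - q^4 * (q^2)^K)).
    { unfold AA. change (qpoch_partial (q^2) (q^2) (S (S K))) with
        (qpoch_partial (q^2) (q^2) (S K) * (1 - q^2 * (q^2 * (q^2)^K))). f_equal. ring. }
    assert (E3 : BB q (S (S (S K))) = BB q (S (S K)) * (1 - q^5 * (q^2)^K)).
    { unfold BB. change (qpoch_partial q (q^2) (S (S (S K)))) with
        (qpoch_partial q (q^2) (S (S K)) * (1 - q * (q^2 * (q^2 * (q^2)^K)))). f_equal. ring. }
    rewrite E1, E3.
    transitivity ((SS q 0 * ((1-q)^2*(1-q^3)^2) * AA q (S (S K)) * AA q (S K)) *
       (1 - q^6 * (q^2)^K) * (1 - q^4 * (q^2)^K)).
    { rewrite E2. ring. }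
    rewrite IH, (SS_rec q K Hq). unfold rho.
    pose proof (pp q K Hq).
    assert (H2 : 0 < q^2 < 1) by (split; nra).
    assert (H4 : 0 < q^4 < 1) by (split; nra).
    assert (H6 : 0 < q^6 < 1) by (split; nra).
    field. repeat split; nz.
Qed.

Lemma qpow_nat q n : 0 < q -> qpow q (INR n) = q ^ n.
Proof. intros. unfold qpow. rewrite <- Rpower_pow by exact H. reflexivity. Qed.

Lemma qnum_nat q m : 0 < q < 1 -> qnum q (INR m) = (1 - (q^2)^m) / (1 - q^2).
Proof.
  intros Hq. unfold qnum. replace (2 * INR m) with (INR (2 * m)) by (rewrite mult_INR; simpl; ring).
  rewrite qpow_nat by lra. rewrite pow_mult. reflexivity.
Qed.

Lemma qnum_half q m : 0 < q < 1 -> qnum q (1/2 + INR m) = (1 - q * (q^2)^m) / (1 - q^2).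
Proof.
  intros Hq. unfold qnum. replace (2 * (1/2 + INR m)) with (INR (1 + 2 * m)) by (rewrite plus_INR, mult_INR; simpl; field).
  rewrite qpow_nat by lra. rewrite pow_add, pow_mult. simpl (q^1). rewrite Rmult_1_r. reflexivity.
Qed.

Lemma qfact_pos q n : 0 < q < 1 -> 0 < qfact q n.
Proof.
  intros Hq. assert (H2 : 0 < q^2 < 1) by (split; nra).
  induction n as [|n IH]; [simpl; lra|].
  change (qfact q (S n)) with (qfact q n * qnum q (INR (S n))).
  rewrite qnum_nat by exact Hq. apply Rmult_lt_0_compat; [exact IH|].
  pose proof (pp q (S n) Hq). apply Rdiv_lt_0_compat; [|lra].
  change ((q^2)^(S n)) with (q^2 * (q^2)^n). pose proof (pp q n Hq). nra.
Qed.

Lemma term6_S q n : 0 < q < 1 ->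
  term6 q (S n) = term6 q n * ((1 - q * (q^2)^n)^2 * (q^4 * (q^2)^0) /
            ((1 - q^2 * (q^2)^n) * (1 - q^6 * (q^2)^0 * (q^2)^n))).
Proof.
  intros Hq. unfold term6.
  assert (H2 : 0 < q^2 < 1) by (split; nra).
  pose proof (pp q n Hq).
  change (qhalf_poch q (S n)) with (qhalf_poch q n * qnum q (1/2 + INR n)).
  change (qfact q (S n)) with (qfact q n * qnum q (INR (S n))).
  change (qfact q (S n + 2)) with (qfact q (n + 2) * qnum q (INR (S (n + 2)))).
  rewrite qnum_half, !qnum_nat by exact Hq.
  replace (S (n+2)) with (n+3)%nat by lia. replace (4 * S n)%nat with (4*n+4)%nat by lia.
  change ((q^2)^(S n)) with (q^2 * (q^2)^n).
  rewrite !pow_add.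
  pose proof (qfact_pos q n Hq). pose proof (qfact_pos q (n+2) Hq).
  assert (H4 : 0 < q^4 < 1) by (split; nra).
  assert (H6 : 0 < q^6 < 1) by (split; nra).
  simpl ((q^2)^3). simpl ((q^2)^0).
  field. repeat split; try nz; try lra.
Qed.

Lemma term6_uu q n : 0 < q < 1 -> term6 q n = uu q 0 n / (1 + q^2).
Proof.
  intros Hq. assert (H2 : 0 < q^2 < 1) by (split; nra).
  induction n as [|n IH].
  - unfold term6. change (qhalf_poch q 0) with 1. change (qfact q 0) with 1.
    change (qfact q (0+2)) with (1 * qnum q (INR 1) * qnum q (INR 2)).
    rewrite !qnum_nat by exact Hq. simpl uu. simpl pow.
    field. split; nra.
  - rewrite term6_S by exact Hq. rewrite IH.
    change (uu q 0 (S n)) with (uu q 0 n * ((1 - q * (q^2)^n)^2 * (q^4 * (q^2)^0) /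
            ((1 - q^2 * (q^2)^n) * (1 - q^6 * (q^2)^0 * (q^2)^n)))).
    field. pose proof (pp q n Hq). assert (0 < q^4 < 1) by (split; nra). assert (0 < q^6 < 1) by (split; nra). simpl ((q^2)^0). repeat split; try nz; apply Rgt_not_eq; lra.
Qed.

Lemma AA_lower q N : 0 < q < 1 ->
  exp (- (q^2/(1-q^2)^2) + (q^2/(1-q^2)^2) * (q^2)^N) <= AA q N.
Proof.
  intros Hq. assert (H2 : 0 < q^2 < 1) by (split; nra).
  set (c := q^2/(1-q^2)^2).
  induction N as [|N IH].
  - unfold AA. simpl qpoch_partial. rewrite pow_O, Rmult_1_r, Rplus_opp_l, exp_0. lra.
  - pose proof (pp q N Hq) as HN.
    set (X := (q^2)^N) in *.
    change (AA q (S N)) with (AA q N * (1 - q^2 * X)).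
    change ((q^2)^(S N)) with (q^2 * X).
    set (x := q^2 * X).
    assert (Hx : 0 < x <= q^2) by (unfold x; split; nra).
    set (y := x / (1 - q^2)).
    assert (Hy : 0 <= y) by (unfold y; apply Rdiv_le_0_compat; lra).
    assert (E : -c + c * x = (-c + c * X) + - y).
    { unfold c, y, x. field. lra. }
    rewrite E, exp_plus, exp_Ropp.
    assert (Hey : 1 + y <= exp y) by apply exp_ineq1_le.
    assert (Hiy : / exp y <= 1 - x).
    { apply Rle_trans with (/ (1 + y)). apply Rinv_le_contravar; lra.
      apply Rmult_le_reg_r with (1 + y); [lra|]. rewrite Rinv_l by lra.
      unfold y. apply Rmult_le_reg_r with (1 - q^2); [lra|].
      field_simplify; [|lra]. nra. }
    apply Rmult_le_compat; try lra.
    + left; apply exp_pos.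
    + left; apply Rinv_0_lt_compat, exp_pos.
Qed.

Theorem mainTheorem6 :
  forall q A B : R, 0 < q < 1 ->
    qpoch_inf (q ^ 2) (q ^ 2) A ->
    qpoch_inf q (q ^ 2) B ->
    infinite_sum (term6 q)
      ((1 + q) ^ 4 * qpow q (1/4) / (pi_q_of q A B * (1 + q + q ^ 2) ^ 2)).
Proof.
  intros q A B Hq HA HB.
  assert (H2 : 0 < q^2 < 1) by (split; nra).
  apply (proj2 (is_lim_seq_Reals _ _)) in HA.
  apply (proj2 (is_lim_seq_Reals _ _)) in HB.
  assert (hA : is_lim_seq (AA q) A) by exact HA.
  assert (hB : is_lim_seq (BB q) B) by exact HB.
  assert (hA1 : is_lim_seq (fun K => AA q (S K)) A) by (apply (is_lim_seq_incr_1 (AA q) A); exact hA).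
  assert (hA2 : is_lim_seq (fun K => AA q (S (S K))) A) by (apply (is_lim_seq_incr_1 (fun K => AA q (S K)) A); exact hA1).
  assert (hB1 : is_lim_seq (fun K => BB q (S K)) B) by (apply (is_lim_seq_incr_1 (BB q) B); exact hB).
  assert (hB2 : is_lim_seq (fun K => BB q (S (S K))) B) by (apply (is_lim_seq_incr_1 (fun K => BB q (S K)) B); exact hB1).
  assert (hS : is_lim_seq (SS q) 1).
  { apply is_lim_seq_le_le with (fun _ => 1) (fun K => / (1 - q^4 * (q^2)^K)).
    - intros K. apply SS_bounds; exact Hq.
    - apply is_lim_seq_const.
    - replace (Finite 1) with (Rbar_inv (Finite (1 - q^4 * 0))) by (simpl; f_equal; field).
      apply is_lim_seq_inv.
      + apply is_lim_seq_minus'. apply is_lim_seq_const.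
        apply is_lim_seq_scal_l with (a := q^4) (lu := Finite 0) .
        apply is_lim_seq_geom. rewrite Rabs_pos_eq; lra.
      + simpl. intro Hc. injection Hc. lra. }
  set (D := (1-q)^2*(1-q^3)^2). set (C := (1-q^2)^2*(1-q^4)).
  assert (hL : is_lim_seq (fun K => SS q 0 * D * AA q (S (S K)) * AA q (S K)) (SS q 0 * D * A * A)).
  { apply is_lim_seq_mult'; [apply is_lim_seq_mult'; [apply is_lim_seq_const|exact hA2]|exact hA1]. }
  assert (hR : is_lim_seq (fun K => SS q K * BB q (S (S K)) ^ 2 * C) (1 * (B * (B * 1)) * C)).
  { apply is_lim_seq_mult'; [|apply is_lim_seq_const].
    apply is_lim_seq_mult'; [exact hS|].
    simpl. apply is_lim_seq_mult'; [exact hB2|]. apply is_lim_seq_mult'; [exact hB2|apply is_lim_seq_const]. }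
  assert (hL' : is_lim_seq (fun K => SS q K * BB q (S (S K)) ^ 2 * C) (SS q 0 * D * A * A)).
  { apply is_lim_seq_ext with (2 := hL). intros K. apply prod_id; exact Hq. }
  apply is_lim_seq_unique in hR. apply is_lim_seq_unique in hL'.
  rewrite hR in hL'. injection hL' as Key.
  set (c := q^2/(1-q^2)^2).
  assert (Apos : exp (-c) <= A).
  { assert (Hl := is_lim_seq_le (fun _ => exp (-c)) (AA q) (exp (-c)) A).
    simpl in Hl. apply Hl; [|apply is_lim_seq_const|exact hA].
    intros N. apply Rle_trans with (2 := AA_lower q N Hq). fold c.
    left. apply exp_increasing. pose proof (pp q N Hq).
    assert (0 < c) by (unfold c; apply Rdiv_lt_0_compat; nra). nra. }
  pose proof (exp_pos (-c)).
  pose proof (SS_bounds q 0 Hq) as HS0.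
  assert (HD : 0 < D) by (unfold D; assert (0 < q^3 < 1) by (split; nra); apply Rmult_lt_0_compat; apply pow_lt; lra).
  assert (HC : 0 < C) by (unfold C; assert (0 < q^4 < 1) by (split; nra); apply Rmult_lt_0_compat; [apply pow_lt|]; lra).
  assert (HB0 : B <> 0).
  { intro HB0. subst B. assert (0 < SS q 0 * D * A * A).
    { apply Rmult_lt_0_compat; [apply Rmult_lt_0_compat; [apply Rmult_lt_0_compat|]|]; lra. }
    lra. }
  assert (HQ : 0 < qpow q (1/4)) by apply exp_pos.
  assert (ES : SS q 0 = B^2 * C / (D * A^2)).
  { replace (B^2*C) with (SS q 0 * D * A * A) by (rewrite <- Key; ring). field. split; apply Rgt_not_eq; lra. }
  apply is_series_Reals.
  apply is_series_ext with (fun n => uu q 0 n * / (1 + q^2)).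
  { intros n. rewrite term6_uu by exact Hq. reflexivity. }
  replace ((1 + q) ^ 4 * qpow q (1/4) / (pi_q_of q A B * (1 + q + q ^ 2) ^ 2))
    with (SS q 0 * / (1 + q^2)).
  { apply is_series_scal_r. apply Series_correct, ex_uu; exact Hq. }
  rewrite ES. unfold pi_q_of, C, D. field.
  repeat split; try lra; try nra.
Qed.
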